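(* Let $n,k,d$ be positive integers with $k\le d<n$, let $\alpha>0$, and for each integer $M\ge 0$ set $n_M=n+M$, $k_M=k+M$, $d_M=d+M$. Let $g_M:[1,k_M]\to\mathbb{R}$ be the piecewise linear function with $g_M(i)=\frac{n_M i\alpha}{n-k+i}$ at the integers $i=1,\dots,k_M$, linear between consecutive integers. Let $s\in(0,1]$ be fixed and put $i_M=1+s(k_M-1)$. Then $$ \lim_{M\to\infty}\frac{g_M(i_M)}{C_{k_M,d_M}\!\left(\alpha,\frac{(d_M-k_M+i_M)\alpha}{d_M-k_M+1}\right)}=1, $$ where for positive integers $k\le d$ and $\alpha,\gamma>0$, $$ C_{k,d}(\alpha,\gamma)=\sum_{j=0}^{k-1}\min\left\{\alpha,\frac{d-j}{d}\gamma\right\}. $$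
   Context: $C_{k,d}(\alpha,\gamma)$ as defined in the claim is the known capacity of functional-repair regenerating codes with reconstruction degree $k$, repair degree $d$, node size $\alpha$ and total repair bandwidth $\gamma$; for this statement only the explicit formula matters. *)

(* Defs.v *)
From Stdlib Require Import Reals Lra.
From Coquelicot Require Import Coquelicot.
Open Scope R_scope.

Fixpoint sumR (f : nat -> R) (m : nat) : R :=
  match m with
  | O => 0
  | S m' => sumR f m' + f m'
  end.

Definition Ccap (k d : nat) (alpha gamma : R) : R :=
  sumR (fun j => Rmin alpha ((INR d - INR j) / INR d * gamma)) k.

Definition gval (n k M : nat) (alpha : R) (i : nat) : R :=
  (INR (n + M) * INR i * alpha) / (INR n - INR k + INR i).

Definition is_pl_interp (h : nat -> R) (kM : nat) (g : R -> R) : Prop :=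
  g (INR kM) = h kM /\
  forall i : nat, (1 <= i)%nat -> (i < kM)%nat ->
  forall t : R, 0 <= t <= 1 ->
    g (INR i + t) = (1 - t) * h i + t * h (S i).

(* Main.v *)
Require Import Defs.
From Stdlib Require Import Reals Lra Lia.
From Coquelicot Require Import Coquelicot.
Open Scope R_scope.

Lemma lim_aux (a b : R) : is_lim_seq (fun M => 1 + a / (INR M + b)) 1.
Proof.
  assert (H1 : is_lim_seq (fun M => INR M + b) p_infty).
  { eapply is_lim_seq_plus. apply is_lim_seq_INR. apply is_lim_seq_const. simpl. constructor. }
  assert (H2 := is_lim_seq_inv _ _ H1 ltac:(discriminate)).
  assert (H3 := is_lim_seq_scal_l _ a _ H2).
  simpl in H3. rewrite Rmult_0_r in H3.
  assert (H4 := is_lim_seq_plus' _ _ 1 0 (is_lim_seq_const 1) H3).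
  rewrite Rplus_0_r in H4. exact H4.
Qed.

Lemma floor_ex : forall K x, 1 <= x -> x < INR K ->
  exists i, (1 <= i)%nat /\ (i < K)%nat /\ INR i <= x < INR i + 1.
Proof.
  induction K; intros x H1 H2.
  - simpl in H2; lra.
  - rewrite S_INR in H2. destruct (Rlt_dec x (INR K)) as [h|h].
    + destruct (IHK x H1 h) as [i [? [? ?]]]. exists i; repeat split; try lia; lra.
    + exists K. destruct K. simpl in *; lra. repeat split; try lia; lra.
Qed.

Lemma sum_ub f a m : (forall j, (j < m)%nat -> f j <= a) -> sumR f m <= a * INR m.
Proof.
  induction m; intros H; cbn [sumR]. rewrite Rmult_0_r; lra.
  rewrite S_INR. assert (sumR f m <= a * INR m) by (apply IHm; intros; apply H; lia).
  assert (f m <= a) by (apply H; lia). lra.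
Qed.

Lemma sum_lb f a T m : 0 <= a -> (forall j, (j < m)%nat -> 0 <= f j) ->
  (forall j, (j < m)%nat -> INR j <= T -> a <= f j) ->
  a * Rmin (INR m) T <= sumR f m.
Proof.
  induction m; intros Ha H0 H1; cbn [sumR].
  - change (INR 0) with 0. apply Rle_trans with (a * 0). apply Rmult_le_compat_l; auto. unfold Rmin; destruct Rle_dec; lra. lra.
  - assert (IH : a * Rmin (INR m) T <= sumR f m) by (apply IHm; auto; intros; apply H1; auto; lia).
    rewrite S_INR. destruct (Rle_dec (INR m) T) as [h|h].
    + assert (a <= f m) by (apply H1; auto).
      assert (a * Rmin (INR m + 1) T <= a * (Rmin (INR m) T + 1)).
      { apply Rmult_le_compat_l; auto. unfold Rmin; repeat destruct Rle_dec; lra. }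
      lra.
    + assert (0 <= f m) by (apply H0; lia).
      replace (Rmin (INR m + 1) T) with (Rmin (INR m) T). lra.
      unfold Rmin; repeat destruct Rle_dec; lra.
Qed.

Lemma h_ub N c a x : 0 < c -> 0 < a -> 0 <= N -> 1 <= x ->
  0 <= N * x * a / (c + x) <= N * a.
Proof.
  intros. replace (N * x * a / (c + x)) with (N * a * (x / (c + x))) by (field; lra).
  assert (0 <= x / (c+x) <= 1).
  { split. apply Rdiv_le_0_compat; lra. apply Rmult_le_reg_r with (c+x). lra.
    unfold Rdiv; rewrite Rmult_assoc, Rinv_l; lra. }
  assert (0 <= N * a) by nra. split; nra.
Qed.

Lemma h_lb N c a x q : 0 < c -> 0 < a -> 0 <= N -> 0 < q <= x ->
  N * a * (1 - c / q) <= N * x * a / (c + x).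
Proof.
  intros. replace (N * x * a / (c + x)) with (N * a * (1 - c / (c + x))) by (field; lra).
  apply Rmult_le_compat_l. nra.
  assert (c / (c+x) <= c / q).
  { unfold Rdiv. apply Rmult_le_compat_l. lra. apply Rinv_le_contravar; lra. }
  lra.
Qed.
Lemma ratio_ge1 P Q : 0 < Q -> Q <= P -> 1 <= P / Q.
Proof. intros. apply Rmult_le_reg_r with Q; auto. unfold Rdiv; rewrite Rmult_assoc, Rinv_l; lra. Qed.

Lemma div_le_r a C w : 0 < C -> a <= w * C -> a / C <= w.
Proof. intros. apply Rmult_le_reg_r with C; auto. unfold Rdiv; rewrite Rmult_assoc, Rinv_l; lra. Qed.

Lemma div_ge_r a C w : 0 < C -> w * C <= a -> w <= a / C.
Proof. intros. apply Rmult_le_reg_r with C; auto. unfold Rdiv; rewrite Rmult_assoc, Rinv_l; lra. Qed.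

Theorem theorem5p1 (n k d : nat) (alpha s : R) (g : nat -> R -> R) :
  (0 < k)%nat -> (k <= d)%nat -> (d < n)%nat ->
  0 < alpha -> 0 < s <= 1 ->
  (forall M : nat, is_pl_interp (gval n k M alpha) (k + M) (g M)) ->
  is_lim_seq
    (fun M : nat =>
       let iM := 1 + s * (INR (k + M) - 1) in
       g M iM /
       Ccap (k + M) (d + M) alpha
         ((INR (d + M) - INR (k + M) + iM) * alpha
            / (INR (d + M) - INR (k + M) + 1)))
    1.
Proof.
  intros Hk Hkd Hdn Ha Hs Hg.
  set (c := INR n - INR k). set (e := INR d - INR k). set (B := (e + 1) / s).
  assert (Hk1 : 1 <= INR k) by (apply (le_INR 1); lia).
  assert (Hc : 0 < c) by (unfold c; apply Rlt_Rminus, lt_INR; lia).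
  assert (He : 0 <= e) by (unfold e; apply Rge_le, Rge_minus, Rle_ge, le_INR; lia).
  assert (HB : 0 < B) by (unfold B; apply Rdiv_lt_0_compat; lra).
  apply is_lim_seq_le_le_loc with
    (u := fun M => 1 + (- (c / s)) / (INR M + (INR k - 1)))
    (w := fun M => 1 + (INR n - INR k + B) / (INR M + (INR k - B)));
    [| apply lim_aux | apply lim_aux].
  pose proof is_lim_seq_INR as HI. apply is_lim_seq_spec in HI.
  destruct (HI (B + c / s + 1)) as [N0 HN0].
  exists N0. intros M HM. specialize (HN0 M HM). cbv zeta.
  assert (Hcs : 0 < c / s) by (apply Rdiv_lt_0_compat; lra).
  set (K := INR (k + M)). set (D := INR (d + M)). set (N := INR (n + M)).
  assert (HK : K = INR k + INR M) by (unfold K; apply plus_INR).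
  assert (HD : D = INR d + INR M) by (unfold D; apply plus_INR).
  assert (HN : N = INR n + INR M) by (unfold N; apply plus_INR).
  assert (HDK : D - K = e) by (unfold e; lra).
  rewrite HDK.
  set (x := 1 + s * (K - 1)).
  set (q := s * (K - 1)).
  assert (Hq : c < q).
  { unfold q. apply Rmult_lt_reg_l with (/ s). apply Rinv_0_lt_compat; lra.
    rewrite <- Rmult_assoc, Rinv_l by lra. unfold Rdiv in HN0. lra. }
  assert (Hx1 : 1 <= x) by (unfold x; nra).
  assert (HxK : x <= K) by (unfold x; nra).
  assert (Hnum : N * alpha * (1 - c / q) <= g M x <= N * alpha).
  { destruct (Hg M) as [Hend Hmid].
    assert (HN0' : 0 <= N) by (unfold N; apply pos_INR).
    destruct (Rle_lt_or_eq_dec x K HxK) as [Hlt|Heq].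
    - destruct (floor_ex (k + M) x Hx1 Hlt) as [i [Hi1 [HiK [Hix1 Hix2]]]].
      replace x with (INR i + (x - INR i)) by ring.
      rewrite (Hmid i Hi1 HiK (x - INR i)) by lra.
      unfold gval. fold N. fold c.
      assert (Hi : 1 <= INR i) by (apply (le_INR 1); lia).
      assert (HSi : INR (S i) = INR i + 1) by apply S_INR.
      pose proof (h_ub N c alpha (INR i) Hc Ha HN0' Hi).
      pose proof (h_ub N c alpha (INR (S i)) Hc Ha HN0' ltac:(lra)).
      pose proof (h_lb N c alpha (INR i) q Hc Ha HN0' ltac:(unfold q, x in *; lra)).
      pose proof (h_lb N c alpha (INR (S i)) q Hc Ha HN0' ltac:(unfold q, x in *; lra)).
      set (t := x - INR i) in *.
      assert (0 <= t < 1) by (unfold t; lra).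
      split; nra.
    - rewrite Heq. unfold K. rewrite Hend. unfold gval. fold N. fold c. fold K.
      assert (Hk1' : 1 <= K) by lra.
      pose proof (h_ub N c alpha K Hc Ha HN0' Hk1').
      pose proof (h_lb N c alpha K q Hc Ha HN0' ltac:(unfold q; nra)).
      lra. }
  set (gam := (e + x) * alpha / (e + 1)).
  assert (Hgam : 0 < gam) by (unfold gam; apply Rdiv_lt_0_compat; nra).
  assert (HDpos : 0 < D) by lra.
  assert (Hden : alpha * (K - B) <= Ccap (k + M) (d + M) alpha gam <= alpha * K).
  { unfold Ccap. fold D. split.
    - apply Rle_trans with (alpha * Rmin (INR (k + M)) (D - B)).
      + apply Rmult_le_compat_l. lra. fold K. unfold Rmin; destruct Rle_dec; lra.
      + apply sum_lb. lra.
        * intros j Hj. apply lt_INR in Hj. fold K in Hj.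
          assert (0 <= (D - INR j) / D * gam).
          { apply Rmult_le_pos; [apply Rdiv_le_0_compat|]; lra. }
          unfold Rmin; destruct Rle_dec; lra.
        * intros j Hj HjT. apply lt_INR in Hj. fold K in Hj.
          assert (A1 : e + 1 <= (D - INR j) * s).
          { unfold B in HjT. apply Rmult_le_reg_r with (/ s). apply Rinv_0_lt_compat; lra.
            rewrite Rmult_assoc, Rinv_r by lra. unfold Rdiv in HjT. lra. }
          assert (A2 : s * D <= e + x) by (unfold x; nra).
          assert (A3 : (e + 1) * D <= (D - INR j) * (e + x)) by nra.
          assert (Hy : (D - INR j) / D * gam = alpha * (((D - INR j) * (e + x)) / ((e + 1) * D)))
            by (unfold gam; field; lra).
          assert (1 <= ((D - INR j) * (e + x)) / ((e + 1) * D)) by (apply ratio_ge1; nra).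
          unfold Rmin; destruct Rle_dec; nra.
    - pose proof (sum_ub (fun j => Rmin alpha ((D - INR j) / D * gam)) alpha (k+M) (fun j _ => Rmin_l _ _)). fold K in H. lra. }
  assert (HCpos : 0 < Ccap (k + M) (d + M) alpha gam) by nra.
  set (C := Ccap (k + M) (d + M) alpha gam) in *.
  assert (Hcq : 0 <= 1 - c / q).
  { assert (c / q <= 1) by (apply Rmult_le_reg_r with q; [lra|]; unfold Rdiv; rewrite Rmult_assoc, Rinv_l; lra). lra. }
  split.
  - replace (1 + - (c / s) / (INR M + (INR k - 1))) with (1 - c / q)
      by (unfold q; rewrite HK; field; split; lra).
    apply div_ge_r; auto.
    assert (HNK : K <= N) by (rewrite HN, HK; apply Rplus_le_compat_r, le_INR; lia).
    assert ((1 - c / q) * C <= (1 - c / q) * (alpha * K)) by (apply Rmult_le_compat_l; lra).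
    assert ((1 - c / q) * (alpha * K) <= (1 - c / q) * (alpha * N)) by (apply Rmult_le_compat_l; nra).
    nra.
  - replace (1 + (INR n - INR k + B) / (INR M + (INR k - B))) with (N / (K - B))
      by (rewrite HN, HK; field; lra).
    apply div_le_r; auto.
    assert (0 < K - B) by lra.
    replace (N / (K - B) * C) with (N * C / (K - B)) by (field; lra).
    apply div_ge_r; auto.
    assert (0 <= N) by (unfold N; apply pos_INR).
    assert (g M x * (K - B) <= N * alpha * (K - B)) by (apply Rmult_le_compat_r; lra).
    assert (N * (alpha * (K - B)) <= N * C) by (apply Rmult_le_compat_l; lra).
    lra.
Qed.
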